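(* Let $\Omega_2=\mathbb{R}\times\mathbb{R}$ (variables $(x,t)$) and let $\varepsilon\in(0,1)$. Define $w_\varepsilon:\Omega_2\to\mathbb{R}$ by $$w_\varepsilon(x,t)=\sum_{k=1}^\infty e^{-2^{(1+\varepsilon)k}}e^{-2^k x}\sin\big(2^{2k+1}t-2^k x\big).$$ Then $w_\varepsilon\in C^\infty(\Omega_2)$ and $w_\varepsilon$ satisfies the heat equation $\partial_t w_\varepsilon-\partial_x^2 w_\varepsilon=0$ on $\Omega_2$. For every fixed $x_0\in\mathbb{R}$, the function $t\mapsto w_\varepsilon(x_0,t)$ is not real analytic at any point $t_0\in\mathbb{R}$. Moreover, there exist positive constants $A_1,A_2$ depending only on $\varepsilon$ such that $$\sup_{x,t\in\mathbb{R}}|w_\varepsilon(x,t)|\exp\!\big(-A_2|x|^{1+\frac1\varepsilon}\big)\le A_1.$$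
   Context: A function of $t$ is real analytic at $t_0$ if its Taylor series at $t_0$ has positive radius of convergence and converges to the function on a neighborhood of $t_0$. *)

(* Defs.v *)
From Stdlib Require Import Reals Lra List.
From Coquelicot Require Import Coquelicot.
Open Scope R_scope.

Definition dx (f : R -> R -> R) : R -> R -> R :=
  fun x t => Derive (fun y => f y t) x.
Definition dt (f : R -> R -> R) : R -> R -> R :=
  fun x t => Derive (fun s => f x s) t.

(* iterated partial derivative: true = d/dx, false = d/dt, applied right-to-left *)
Fixpoint pderiv (l : list bool) (f : R -> R -> R) : R -> R -> R :=
  match l with
  | nil => f
  | b :: l' => if b then dx (pderiv l' f) else dt (pderiv l' f)
  end.

Definition smooth2 (f : R -> R -> R) : Prop :=
  forall l : list bool,
    (forall x t, ex_derive (fun y => pderiv l f y t) x) /\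
    (forall x t, ex_derive (fun s => pderiv l f x s) t) /\
    (forall x t, continuous (fun p : R * R => pderiv l f (fst p) (snd p)) (x, t)).

Definition real_analytic_at (f : R -> R) (t0 : R) : Prop :=
  (forall n, ex_derive_n f n t0) /\
  exists r, 0 < r /\
    forall t, Rabs (t - t0) < r ->
      is_series (fun n => Derive_n f n t0 / INR (Factorial.fact n) * (t - t0) ^ n) (f t).

(* |x|^p with the usual convention 0^p = 0 for p > 0 *)
Definition abspow (x p : R) : R :=
  if Req_EM_T x 0 then 0 else Rpower (Rabs x) p.

Definition w_term (eps x t : R) (k : nat) : R :=
  exp (- Rpower 2 ((1 + eps) * INR k)) * exp (- (2 ^ k) * x)
  * sin (2 ^ (2 * k + 1) * t - 2 ^ k * x).

Definition w_eps (eps : R) : R -> R -> R :=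
  fun x t => Series (fun n => w_term eps x t (S n)).

(* Main.v *)
Require Import Defs.
From Stdlib Require Import Reals.
From Coquelicot Require Import Coquelicot.
From Stdlib Require Import Lra Lia Factorial FunctionalExtensionality ZArith.
Open Scope R_scope.
Definition cc (eps : R) (k : nat) : R := exp (- Rpower 2 ((1 + eps) * INR k)).

Lemma pow2_ge_INR k : INR k <= 2 ^ k.
Proof.
  induction k. simpl; lra.
  rewrite S_INR. simpl. assert (1 <= 2^k) by (apply pow_R1_Rle; lra). lra.
Qed.

Lemma ex_series_Rscal (c : R) (a : nat -> R) : ex_series a -> ex_series (fun n => c * a n).
Proof. intro H. exact (@ex_series_scal_l R_AbsRing R_NormedModule c a H). Qed.

Lemma ex_series_Rle (a b : nat -> R) : (forall n, Rabs (a n) <= b n) -> ex_series b -> ex_series a.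
Proof. intros H1 H2. exact (@ex_series_le R_AbsRing R_CompleteNormedModule a b H1 H2). Qed.

Lemma Rpower2_split eps k : Rpower 2 ((1 + eps) * INR k) = 2 ^ k * exp (eps * INR k * ln 2).
Proof.
  replace ((1 + eps) * INR k) with (INR k + eps * INR k) by ring.
  rewrite Rpower_plus, Rpower_pow by lra. unfold Rpower. reflexivity.
Qed.

Lemma summable (eps : R) (N : nat) (R0 : R) : 0 < eps -> 0 <= R0 ->
  ex_series (fun k => 4 ^ (N * (k + 1)) * cc eps k * exp (2 ^ k * R0)).
Proof.
  intros He HR.
  set (A := 2 * 4 ^ N).
  assert (HA : 2 <= A). { unfold A. assert (1 <= 4 ^ N) by (apply pow_R1_Rle; lra). lra. }
  set (L := ln A).
  assert (HL : 0 < L). { unfold L. rewrite <- ln_1. apply ln_increasing; lra. }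
  assert (Hl2 : 0 < ln 2). { rewrite <- ln_1. apply ln_increasing; lra. }
  destruct (INR_archimed (eps * ln 2) (R0 + L + 1)) as [K HK].
  { apply Rmult_lt_0_compat; lra. }
  apply (proj2 (ex_series_incr_n _ K)).
  apply (ex_series_Rle _ (fun k => 4 ^ N * (/2) ^ K * (/2) ^ k)).
  2:{ apply (ex_series_Rscal (4 ^ N * (/ 2) ^ K)). apply ex_series_geom.
      rewrite Rabs_pos_eq; lra. }
  intro k. set (m := (K + k)%nat).
  assert (Hm : INR K <= INR m) by (apply le_INR; lia).
  assert (Hpos : 0 < 4 ^ (N * (m + 1)) * cc eps m * exp (2 ^ m * R0)).
  { unfold cc. repeat apply Rmult_lt_0_compat; try apply exp_pos. apply pow_lt; lra. }
  rewrite Rabs_pos_eq by lra.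
  replace (4 ^ N * (/ 2) ^ K * (/ 2) ^ k) with (4 ^ N * (/ 2) ^ m)
    by (unfold m; rewrite pow_add; ring).
  replace (4 ^ (N * (m + 1))) with (4 ^ N * (4 ^ N) ^ m)
    by (rewrite <- pow_mult, <- pow_add; f_equal; lia).
  rewrite !Rmult_assoc. apply Rmult_le_compat_l. apply pow_le; lra.
  assert (Hk : INR m * L + 2 ^ m * R0 <= Rpower 2 ((1 + eps) * INR m)).
  { rewrite Rpower2_split.
    assert (E1 : 1 + eps * INR m * ln 2 <= exp (eps * INR m * ln 2)) by apply exp_ineq1_le.
    assert (E2 : eps * INR K * ln 2 <= eps * INR m * ln 2).
    { apply Rmult_le_compat_r; [lra|]. apply Rmult_le_compat_l; lra. }
    assert (E3 : INR m <= 2 ^ m) by apply pow2_ge_INR.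
    assert (E4 : 0 < 2 ^ m) by (apply pow_lt; lra).
    assert (2 ^ m * (1 + R0 + L + 1) <= 2 ^ m * exp (eps * INR m * ln 2)).
    { apply Rmult_le_compat_l; lra. }
    nra. }
  assert (Hc : cc eps m <= exp (- (INR m * L)) * exp (- (2 ^ m * R0))).
  { unfold cc. rewrite <- exp_plus. destruct (Req_dec (INR m * L + 2 ^ m * R0) (Rpower 2 ((1 + eps) * INR m))) as [E|E].
    - rewrite <- E. right. f_equal. ring.
    - left. apply exp_increasing. lra. }
  assert (HAm : exp (INR m * L) = A ^ m).
  { unfold L. rewrite <- Rpower_pow by lra. unfold Rpower. reflexivity. }
  rewrite exp_Ropp in Hc. rewrite HAm in Hc.
  assert (HAm' : 0 < A ^ m) by (apply pow_lt; lra).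
  assert (He2 : exp (- (2 ^ m * R0)) * exp (2 ^ m * R0) = 1) by (rewrite <- exp_plus; replace (_ + _) with 0 by ring; apply exp_0).
  assert (H4 : 0 < (4 ^ N) ^ m) by (apply pow_lt; apply pow_lt; lra).
  assert (HAe : A ^ m = (4 ^ N) ^ m * 2 ^ m) by (unfold A; rewrite Rpow_mult_distr; ring).
  assert (Hi : (/ 2) ^ m = / 2 ^ m) by (rewrite pow_inv; reflexivity).
  rewrite Hi.
  apply Rle_trans with ((4 ^ N) ^ m * (/ A ^ m * exp (- (2 ^ m * R0))) * exp (2 ^ m * R0)).
  { rewrite <- Rmult_assoc. apply Rmult_le_compat_r. left; apply exp_pos.
    apply Rmult_le_compat_l; lra. }
  rewrite HAe. right. rewrite exp_Ropp.
  assert (0 < exp (2 ^ m * R0)) by apply exp_pos.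
  assert (0 < 2 ^ m) by (apply pow_lt; lra).
  field. repeat split; apply Rgt_not_eq; lra.
Qed.
Lemma series_Un_cv (a : nat -> R) : ex_series a -> Un_cv (sum_f_R0 a) (Series a).
Proof. intro H. apply Series_correct in H. apply is_series_Reals in H. exact H. Qed.

Lemma Series_abs_le (u M : nat -> R) : (forall k, Rabs (u k) <= M k) -> ex_series M ->
  Rabs (Series u) <= Series M.
Proof.
  intros H1 H2. eapply Rle_trans. apply Series_Rabs.
  apply (ex_series_Rle _ M); [intro n; rewrite Rabs_Rabsolu; auto | auto].
  apply Series_le; auto. intro n; split; [apply Rabs_pos|auto].
Qed.

Lemma tail_bound (u M : nat -> R) n : (forall k, Rabs (u k) <= M k) -> ex_series M ->
  Rabs (Series u - sum_f_R0 u n) <= Series M - sum_f_R0 M n.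
Proof.
  intros H1 H2.
  assert (Hu : ex_series u) by (apply (ex_series_Rle _ M); auto).
  rewrite (Series_incr_n u (S n)) by (lia || auto).
  rewrite (Series_incr_n M (S n)) by (lia || auto). simpl pred.
  replace (sum_f_R0 u n + Series (fun k => u (S n + k)%nat) - sum_f_R0 u n)
    with (Series (fun k => u (S n + k)%nat)) by ring.
  replace (sum_f_R0 M n + Series (fun k => M (S n + k)%nat) - sum_f_R0 M n)
    with (Series (fun k => M (S n + k)%nat)) by ring.
  apply Series_abs_le; auto. apply (ex_series_incr_n M (S n)); auto.
Qed.

Lemma sum_deriv (u u' : nat -> R -> R) y n :
  (forall k, derivable_pt_lim (u k) y (u' k y)) ->
  derivable_pt_lim (fun z => sum_f_R0 (fun k => u k z) n) y (sum_f_R0 (fun k => u' k y) n).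
Proof.
  intro H. induction n; simpl. apply H.
  apply (derivable_pt_lim_plus (fun z => sum_f_R0 (fun k => u k z) n) (u (S n))); auto.
Qed.

Lemma series_deriv (u u' : nat -> R -> R) (M : nat -> R) x0 r :
  0 < r ->
  (forall k y, Rabs (y - x0) < r -> derivable_pt_lim (u k) y (u' k y)) ->
  (forall k y, Rabs (y - x0) < r -> Rabs (u' k y) <= M k) -> ex_series M ->
  (forall y, Rabs (y - x0) < r -> ex_series (fun k => u k y)) ->
  derivable_pt_lim (fun y => Series (fun k => u k y)) x0 (Series (fun k => u' k x0)).
Proof.
  intros Hr Hd HM HMs Hs.
  set (d := mkposreal r Hr).
  apply (CVU_derivable (fun n y => sum_f_R0 (fun k => u k y) n)
                       (fun n y => sum_f_R0 (fun k => u' k y) n)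
                       (fun y => Series (fun k => u k y))
                       (fun y => Series (fun k => u' k y)) x0 d).
  - intros e He. destruct (series_Un_cv M HMs e He) as [N HN].
    exists N. intros n y Hn Hy.
    eapply Rle_lt_trans. apply tail_bound; [|exact HMs]. intro k; apply HM; exact Hy.
    specialize (HN n Hn). unfold Rdist in HN.
    rewrite Rabs_minus_sym in HN. eapply Rle_lt_trans; [apply Rle_abs|exact HN].
  - intros y Hy. apply series_Un_cv. apply Hs. exact Hy.
  - intros n y Hy. apply sum_deriv. intro k. apply Hd. exact Hy.
  - unfold Boule. simpl. rewrite Rminus_diag, Rabs_R0. exact Hr.
Qed.
Definition Tm (C : nat -> R) (ph : R) (k : nat) (x t : R) : R :=
  C k * exp (- (2 ^ k) * x) * sin (2 ^ (2 * k + 1) * t - 2 ^ k * x + ph).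

Definition Cx (C : nat -> R) : nat -> R := fun j => C j * (- (sqrt 2 * 2 ^ j)).
Definition Ct (C : nat -> R) : nat -> R := fun j => C j * 2 ^ (2 * j + 1).

Lemma Tm_dx C ph k x t :
  derivable_pt_lim (fun y => Tm C ph k y t) x (Tm (Cx C) (ph + PI / 4) k x t).
Proof.
  apply is_derive_Reals. unfold Tm, Cx.
  auto_derive; auto.
  replace (k + (k + 0) + 1)%nat with (2 * k + 1)%nat by lia.
  replace (2 ^ (2 * k + 1) * t - 2 ^ k * x + (ph + PI / 4)) with ((2 ^ (2 * k + 1) * t + - (2 ^ k * x) + ph) + PI / 4) by ring.
  rewrite (sin_plus _ (PI / 4)), cos_PI4, sin_PI4.
  assert (H2 : sqrt 2 * sqrt 2 = 2) by (apply sqrt_sqrt; lra).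
  assert (0 < sqrt 2) by (apply sqrt_lt_R0; lra).
  field_simplify; [|lra]. 
  field. lra.
Qed.

Lemma Tm_dt C ph k x t :
  derivable_pt_lim (fun s => Tm C ph k x s) t (Tm (Ct C) (ph + PI / 2) k x t).
Proof.
  apply is_derive_Reals. unfold Tm, Ct.
  auto_derive; auto.
  replace (k + (k + 0) + 1)%nat with (2 * k + 1)%nat by lia.
  replace (2 ^ (2 * k + 1) * t - 2 ^ k * x + (ph + PI / 2)) with ((2 ^ (2 * k + 1) * t + - (2 ^ k * x) + ph) + PI / 2) by ring.
  rewrite (sin_plus _ (PI / 2)), cos_PI2, sin_PI2. ring.
Qed.

Definition Sf (C : nat -> R) (ph : R) (x t : R) : R := Series (fun n => Tm C ph (S n) x t).
Definition good (eps : R) (C : nat -> R) : Prop :=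
  exists N : nat, forall k, Rabs (C k) <= 4 ^ (N * (k + 1)) * cc eps k.

Lemma cc_pos eps k : 0 < cc eps k.
Proof. apply exp_pos. Qed.

Lemma good_mul eps C (f : nat -> R) : good eps C -> (forall k, Rabs (f k) <= 4 ^ (k + 1)) ->
  good eps (fun k => C k * f k).
Proof.
  intros [N HN] Hf. exists (S N). intro k.
  rewrite Rabs_mult.
  replace (S N * (k + 1))%nat with (N * (k + 1) + (k + 1))%nat by lia.
  rewrite pow_add.
  replace (4 ^ (N * (k + 1)) * 4 ^ (k + 1) * cc eps k) with ((4 ^ (N * (k + 1)) * cc eps k) * 4 ^ (k + 1)) by ring.
  apply Rmult_le_compat; auto; apply Rabs_pos.
Qed.

Lemma good_Cx eps C : good eps C -> good eps (Cx C).
Proof.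
  intro H. apply good_mul; auto. intro k.
  rewrite Rabs_Ropp, Rabs_mult, Rabs_pos_eq, Rabs_pos_eq.
  2: apply pow_le; lra. 2: apply sqrt_pos.
  rewrite pow_add, pow_1.
  assert (sqrt 2 <= 2). { rewrite <- (sqrt_square 2) at 2 by lra. apply sqrt_le_1; lra. }
  assert (2 ^ k <= 4 ^ k) by (apply pow_incr; lra).
  assert (0 <= 2 ^ k) by (apply pow_le; lra).
  assert (0 <= sqrt 2) by apply sqrt_pos.
  nra.
Qed.

Lemma good_Ct eps C : good eps C -> good eps (Ct C).
Proof.
  intro H. apply good_mul; auto. intro k.
  rewrite Rabs_pos_eq by (apply pow_le; lra).
  rewrite !pow_add, pow_mult, !pow_1. replace (2 ^ 2) with 4 by ring.
  assert (0 <= 4 ^ k) by (apply pow_le; lra). lra.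
Qed.

Lemma Tm_bound C ph k x t R0 : Rabs x <= R0 ->
  Rabs (Tm C ph k x t) <= Rabs (C k) * exp (2 ^ k * R0).
Proof.
  intro Hx. unfold Tm. rewrite !Rabs_mult.
  rewrite (Rabs_pos_eq (exp _)) by (left; apply exp_pos).
  rewrite Rmult_assoc. apply Rmult_le_compat_l. apply Rabs_pos.
  rewrite <- (Rmult_1_r (exp (2 ^ k * R0))).
  apply Rmult_le_compat. left; apply exp_pos. apply Rabs_pos.
  - destruct (Req_dec (- 2 ^ k * x) (2 ^ k * R0)) as [E|E]. rewrite E; lra.
    left. apply exp_increasing.
    assert (0 < 2 ^ k) by (apply pow_lt; lra).
    assert (- x <= R0) by (apply Rle_trans with (Rabs x); [rewrite <- Rabs_Ropp; apply Rle_abs | exact Hx]).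
    nra.
  - apply Rabs_le. apply SIN_bound.
Qed.

Lemma good_M eps C R0 : 0 < eps -> good eps C -> 0 <= R0 ->
  exists M : nat -> R, ex_series M /\
    forall k ph x t, Rabs x <= R0 -> Rabs (Tm C ph (S k) x t) <= M k.
Proof.
  intros He [N HN] HR.
  exists (fun k => 4 ^ (N * (S k + 1)) * cc eps (S k) * exp (2 ^ (S k) * R0)).
  split.
  - apply (ex_series_incr_1 (fun k => 4 ^ (N * (k + 1)) * cc eps k * exp (2 ^ k * R0))).
    apply summable; auto.
  - intros k ph x t Hx. eapply Rle_trans. apply Tm_bound. exact Hx.
    apply Rmult_le_compat_r. left; apply exp_pos. apply HN.
Qed.

Lemma Sf_ex eps C ph x t : 0 < eps -> good eps C -> ex_series (fun n => Tm C ph (S n) x t).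
Proof.
  intros He HC. destruct (good_M eps C (Rabs x) He HC (Rabs_pos x)) as [M [HM1 HM2]].
  apply (ex_series_Rle _ M); auto. intro n. apply HM2. lra.
Qed.

Lemma Sf_dx eps C ph x t : 0 < eps -> good eps C ->
  derivable_pt_lim (fun y => Sf C ph y t) x (Sf (Cx C) (ph + PI / 4) x t).
Proof.
  intros He HC. unfold Sf.
  destruct (good_M eps (Cx C) (Rabs x + 1) He (good_Cx eps C HC)) as [M [HM1 HM2]].
  { assert (0 <= Rabs x) by apply Rabs_pos. lra. }
  apply (series_deriv (fun k y => Tm C ph (S k) y t) (fun k y => Tm (Cx C) (ph + PI / 4) (S k) y t) M x 1); auto.
  - lra.
  - intros k y _. apply Tm_dx.
  - intros k y Hy. apply HM2.
    assert (Rabs y <= Rabs x + Rabs (y - x)).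
    { replace y with (x + (y - x)) at 1 by ring. apply Rabs_triang. }
    lra.
  - intros y _. apply (Sf_ex eps); auto.
Qed.

Lemma Sf_dt eps C ph x t : 0 < eps -> good eps C ->
  derivable_pt_lim (fun s => Sf C ph x s) t (Sf (Ct C) (ph + PI / 2) x t).
Proof.
  intros He HC. unfold Sf.
  destruct (good_M eps (Ct C) (Rabs x) He (good_Ct eps C HC) (Rabs_pos x)) as [M [HM1 HM2]].
  apply (series_deriv (fun k s => Tm C ph (S k) x s) (fun k s => Tm (Ct C) (ph + PI / 2) (S k) x s) M t 1); auto.
  - lra.
  - intros k y _. apply Tm_dt.
  - intros k y Hy. apply HM2. lra.
  - intros y _. apply (Sf_ex eps); auto.
Qed.

Lemma Sf_bound eps C R0 : 0 < eps -> good eps C -> 0 <= R0 ->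
  exists B, forall ph x t, Rabs x <= R0 -> Rabs (Sf C ph x t) <= B.
Proof.
  intros He HC HR. destruct (good_M eps C R0 He HC HR) as [M [HM1 HM2]].
  exists (Series M). intros ph x t Hx. unfold Sf. apply Series_abs_le; auto.
Qed.

Lemma lip (f df : R -> R) a b B :
  (forall z, derivable_pt_lim f z (df z)) ->
  (forall z, Rmin a b <= z <= Rmax a b -> Rabs (df z) <= B) ->
  Rabs (f b - f a) <= B * Rabs (b - a).
Proof.
  intros Hd HB.
  destruct (MVT_gen f a b df) as [c [Hc Heq]].
  - intros z _. apply is_derive_Reals. apply Hd.
  - intros z _. apply derivable_continuous_pt. exists (df z). apply Hd.
  - rewrite Heq, Rabs_mult. apply Rmult_le_compat_r. apply Rabs_pos. apply HB. exact Hc.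
Qed.

Lemma between_abs a b z : Rmin a b <= z <= Rmax a b -> Rabs (z - a) <= Rabs (b - a).
Proof.
  unfold Rmin, Rmax. intros Hz. destruct (Rle_dec a b);
  unfold Rabs; destruct (Rcase_abs (z - a)); destruct (Rcase_abs (b - a)); lra.
Qed.

Lemma Rball_eq (x y e : R) : ball x e y <-> Rabs (y - x) < e.
Proof. unfold ball; simpl; unfold AbsRing_ball, abs, minus, plus, opp; simpl. tauto. Qed.

Lemma Sf_cont eps C ph x t : 0 < eps -> good eps C ->
  continuous (fun p : R * R => Sf C ph (fst p) (snd p)) (x, t).
Proof.
  intros He HC.
  assert (HR : 0 <= Rabs x + 1) by (assert (0 <= Rabs x) by apply Rabs_pos; lra).
  destruct (Sf_bound eps (Cx C) (Rabs x + 1) He (good_Cx eps C HC) HR) as [B1 HB1].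
  destruct (Sf_bound eps (Ct C) (Rabs x + 1) He (good_Ct eps C HC) HR) as [B2 HB2].
  assert (HB1p : 0 <= B1). { eapply Rle_trans; [apply Rabs_pos|]. apply (HB1 0 x 0). lra. }
  assert (HB2p : 0 <= B2). { eapply Rle_trans; [apply Rabs_pos|]. apply (HB2 0 x 0). lra. }
  apply filterlim_locally. intros e.
  assert (Hd : 0 < Rmin 1 (e / (B1 + B2 + 1))).
  { apply Rmin_glb_lt. lra. apply Rdiv_lt_0_compat. apply cond_pos. lra. }
  exists (mkposreal _ Hd). intros [y s] [Hy Hs]. simpl in Hy, Hs |- *.
  apply Rball_eq in Hy. apply Rball_eq in Hs. apply Rball_eq.
  assert (Hm1 := Rmin_l 1 (e / (B1 + B2 + 1))).
  assert (Hm2 := Rmin_r 1 (e / (B1 + B2 + 1))).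
  set (d := Rmin 1 (e / (B1 + B2 + 1))) in *.
  assert (Hy' : Rabs (y - x) < d) by exact Hy.
  assert (Hs' : Rabs (s - t) < d) by exact Hs.
  clear Hy Hs.
  assert (L1 : Rabs (Sf C ph y s - Sf C ph x s) <= B1 * Rabs (y - x)).
  { apply (lip (fun z => Sf C ph z s) (fun z => Sf (Cx C) (ph + PI / 4) z s)).
    - intro z. apply (Sf_dx eps); auto.
    - intros z Hz. apply HB1.
      assert (Rabs (z - x) <= Rabs (y - x)).
      { apply between_abs; exact Hz. }
      assert (Rabs z <= Rabs x + Rabs (z - x)).
      { replace z with (x + (z - x)) at 1 by ring. apply Rabs_triang. }
      lra. }
  assert (L2 : Rabs (Sf C ph x s - Sf C ph x t) <= B2 * Rabs (s - t)).
  { apply (lip (fun z => Sf C ph x z) (fun z => Sf (Ct C) (ph + PI / 2) x z)).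
    - intro z. apply (Sf_dt eps); auto.
    - intros z Hz. apply HB2. lra. }
  replace (Sf C ph y s - Sf C ph x t) with ((Sf C ph y s - Sf C ph x s) + (Sf C ph x s - Sf C ph x t)) by ring.
  eapply Rle_lt_trans. apply Rabs_triang.
  assert (B1 * Rabs (y - x) <= B1 * d) by (apply Rmult_le_compat_l; lra).
  assert (B2 * Rabs (s - t) <= B2 * d) by (apply Rmult_le_compat_l; lra).
  assert (Hde : d * (B1 + B2 + 1) <= e).
  { assert (d * (B1 + B2 + 1) <= e / (B1 + B2 + 1) * (B1 + B2 + 1)) by (apply Rmult_le_compat_r; lra).
    replace (e / (B1 + B2 + 1) * (B1 + B2 + 1)) with (pos e) in H1 by (field; lra). lra. }
  assert (0 < d) by exact Hd.
  nra.
Qed.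

Lemma dx_Sf eps C ph : 0 < eps -> good eps C -> dx (Sf C ph) = Sf (Cx C) (ph + PI / 4).
Proof.
  intros He HC. unfold dx. extensionality x. extensionality t.
  apply is_derive_unique. apply is_derive_Reals. apply (Sf_dx eps); auto.
Qed.

Lemma dt_Sf eps C ph : 0 < eps -> good eps C -> dt (Sf C ph) = Sf (Ct C) (ph + PI / 2).
Proof.
  intros He HC. unfold dt. extensionality x. extensionality t.
  apply is_derive_unique. apply is_derive_Reals. apply (Sf_dt eps); auto.
Qed.

Lemma pderiv_Sf eps l : 0 < eps -> forall C ph, good eps C ->
  exists C' ph', good eps C' /\ pderiv l (Sf C ph) = Sf C' ph'.
Proof.
  intro He. induction l as [|b l IH]; intros C ph HC.
  - exists C, ph. auto.
  - destruct (IH C ph HC) as [C' [ph' [HC' E]]]. simpl. rewrite E.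
    destruct b.
    + exists (Cx C'), (ph' + PI / 4). split. apply (good_Cx eps); auto. apply (dx_Sf eps); auto.
    + exists (Ct C'), (ph' + PI / 2). split. apply (good_Ct eps); auto. apply (dt_Sf eps); auto.
Qed.

Lemma w_eps_Sf eps : w_eps eps = Sf (cc eps) 0.
Proof.
  extensionality x. extensionality t. unfold w_eps, Sf. apply Series_ext. intro n.
  unfold w_term, Tm, cc. rewrite Rplus_0_r. reflexivity.
Qed.

Lemma good_cc eps : good eps (cc eps).
Proof.
  exists 0%nat. intro k. simpl. rewrite Rmult_1_l, Rabs_pos_eq. lra. left; apply cc_pos.
Qed.

Lemma part_smooth eps : 0 < eps -> smooth2 (w_eps eps).
Proof.
  intros He l. rewrite w_eps_Sf.
  destruct (pderiv_Sf eps l He (cc eps) 0 (good_cc eps)) as [C [ph [HC E]]].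
  rewrite E. split; [|split].
  - intros x t. exists (Sf (Cx C) (ph + PI / 4) x t). apply is_derive_Reals. apply (Sf_dx eps); auto.
  - intros x t. exists (Sf (Ct C) (ph + PI / 2) x t). apply is_derive_Reals. apply (Sf_dt eps); auto.
  - intros x t. apply (Sf_cont eps); auto.
Qed.

Lemma part_heat eps : 0 < eps -> forall x t, dt (w_eps eps) x t - dx (dx (w_eps eps)) x t = 0.
Proof.
  intros He x t. rewrite w_eps_Sf.
  rewrite (dt_Sf eps) by (auto; apply good_cc).
  rewrite (dx_Sf eps (cc eps)) by (auto; apply good_cc).
  rewrite (dx_Sf eps (Cx (cc eps))) by (auto; apply good_Cx, good_cc).
  replace (0 + PI / 4 + PI / 4) with (0 + PI / 2) by field.
  unfold Sf. rewrite <- Series_minus;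
    [| apply (Sf_ex eps); auto; apply good_Ct, good_cc
     | apply (Sf_ex eps); auto; apply good_Cx, good_Cx, good_cc].
  apply trans_eq with (Series (fun n : nat => 0 * 0)).
  2:{ rewrite (Series_scal_l 0 (fun _ => 0)). ring. }
  apply Series_ext. intro n. rewrite Rmult_0_l.
  unfold Tm, Cx, Ct.
  assert (H2 : sqrt 2 * sqrt 2 = 2) by (apply sqrt_sqrt; lra).
  replace (2 ^ (2 * S n + 1)) with (2 * (2 ^ S n * 2 ^ S n)) at 1
    by (rewrite <- pow_add; replace (2 * S n + 1)%nat with (S (S n + S n)) by lia; simpl; ring).
  replace (cc eps (S n) * - (sqrt 2 * 2 ^ S n) * - (sqrt 2 * 2 ^ S n))
    with (cc eps (S n) * ((sqrt 2 * sqrt 2) * (2 ^ S n * 2 ^ S n))) by ring.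
  rewrite H2. ring.
Qed.

Lemma exp_INR_mult k y : exp (INR k * y) = exp y ^ k.
Proof.
  induction k. simpl. rewrite Rmult_0_l. apply exp_0.
  rewrite S_INR, Rmult_plus_distr_r, Rmult_1_l, exp_plus, IHk. simpl. ring.
Qed.

Lemma pow2_exp k : 2 ^ k = exp (INR k * ln 2).
Proof. rewrite <- Rpower_pow by lra. reflexivity. Qed.

Lemma exp_le_mono a b : a <= b -> exp a <= exp b.
Proof. intro H. destruct (Req_dec a b) as [E|E]. rewrite E; lra. left; apply exp_increasing; lra. Qed.

Lemma term_bound eps k x : 0 < eps ->
  cc eps k * exp (2 ^ k * Rabs x) <=
  exp (- Rpower 2 ((1 + eps) * INR k) / 2) * exp (Rpower 2 (1 / eps) * abspow x (1 + 1 / eps)).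
Proof.
  intro He. unfold cc.
  set (Rp := Rpower 2 ((1 + eps) * INR k)).
  set (P := abspow x (1 + 1 / eps)).
  assert (HP : 0 <= P).
  { unfold P, abspow. destruct (Req_EM_T x 0). lra. left; apply exp_pos. }
  assert (HA2 : 0 < Rpower 2 (1 / eps)) by apply exp_pos.
  assert (HRp : Rp = 2 ^ k * exp (eps * INR k * ln 2)) by apply Rpower2_split.
  assert (H2k : 0 < 2 ^ k) by (apply pow_lt; lra).
  assert (HRp0 : 0 <= Rp) by (rewrite HRp; left; apply Rmult_lt_0_compat; auto; apply exp_pos).
  destruct (Rle_dec (2 * Rabs x) (exp (eps * INR k * ln 2))) as [HA|HB].
  -
    rewrite <- exp_plus. rewrite <- exp_plus. apply exp_le_mono.
    assert (2 ^ k * (2 * Rabs x) <= 2 ^ k * exp (eps * INR k * ln 2)) by (apply Rmult_le_compat_l; lra).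
    assert (0 <= Rpower 2 (1 / eps) * P) by (apply Rmult_le_pos; lra).
    assert (0 < Rp) by (rewrite HRp; apply Rmult_lt_0_compat; auto; apply exp_pos).
    nra.
  - apply Rnot_le_lt in HB.
    assert (Hu : 0 < Rabs x). { assert (0 < exp (eps * INR k * ln 2)) by apply exp_pos. lra. }
    assert (Hx : x <> 0). { intro E; rewrite E, Rabs_R0 in Hu; lra. }
    assert (HPe : P = exp ((1 + 1 / eps) * ln (Rabs x))).
    { unfold P, abspow. destruct (Req_EM_T x 0); [contradiction|reflexivity]. }
    assert (Hl : eps * INR k * ln 2 < ln 2 + ln (Rabs x)).
    { rewrite <- ln_mult by lra. rewrite <- (ln_exp (eps * INR k * ln 2)).
      apply ln_increasing; auto. apply exp_pos. }
    assert (Hl2 : INR k * ln 2 < (ln 2 + ln (Rabs x)) / eps).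
    { apply (Rmult_lt_reg_l eps); auto. field_simplify; lra. }
    assert (Hk : 2 ^ k * Rabs x < Rpower 2 (1 / eps) * P).
    { rewrite pow2_exp, HPe. unfold Rpower. rewrite <- (exp_ln (Rabs x)) at 1 by auto.
      rewrite <- !exp_plus. apply exp_increasing.
      replace (1 / eps * ln 2 + (1 + 1 / eps) * ln (Rabs x)) with ((ln 2 + ln (Rabs x)) / eps + ln (Rabs x)) by (field; lra).
      lra. }
    rewrite <- !exp_plus. left. apply exp_increasing. lra.
Qed.

Lemma part_growth eps : 0 < eps -> exists A1 A2 : R, 0 < A1 /\ 0 < A2 /\
     forall x t : R,
       Rabs (w_eps eps x t) * exp (- A2 * abspow x (1 + 1 / eps)) <= A1.
Proof.
  intro He.
  set (E := fun n : nat => exp (- Rpower 2 ((1 + eps) * INR (S n)) / 2)).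
  assert (HE : ex_series E).
  { apply (ex_series_Rle _ (fun n => exp (- / 2) ^ (S n))).
    - intro n. unfold E. rewrite Rabs_pos_eq by (left; apply exp_pos).
      rewrite <- exp_INR_mult.
      destruct (Req_dec (- Rpower 2 ((1 + eps) * INR (S n)) / 2) (INR (S n) * - / 2)) as [Q|Q].
      rewrite Q; lra. left. apply exp_increasing.
      assert (INR (S n) <= Rpower 2 ((1 + eps) * INR (S n))).
      { rewrite Rpower2_split. eapply Rle_trans. apply pow2_ge_INR.
        rewrite <- (Rmult_1_r (2 ^ S n)) at 1. apply Rmult_le_compat_l. left; apply pow_lt; lra.
        rewrite <- exp_0. destruct (Req_dec 0 (eps * INR (S n) * ln 2)) as [Q2|Q2]. rewrite <- Q2; lra.
        left. apply exp_increasing.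
        assert (0 < ln 2) by (rewrite <- ln_1; apply ln_increasing; lra).
        assert (0 < INR (S n)) by (apply lt_0_INR; lia).
        apply Rmult_lt_0_compat; auto. apply Rmult_lt_0_compat; auto. }
      lra.
    - apply (ex_series_incr_1 (fun n => exp (- / 2) ^ n)). apply ex_series_geom.
      rewrite Rabs_pos_eq by (left; apply exp_pos).
      rewrite <- exp_0. apply exp_increasing. lra. }
  set (A2 := Rpower 2 (1 / eps)).
  exists (Rabs (Series E) + 1), A2. split; [|split].
  - assert (0 <= Rabs (Series E)) by apply Rabs_pos. lra.
  - apply exp_pos.
  - intros x t. set (P := abspow x (1 + 1 / eps)).
    rewrite w_eps_Sf. unfold Sf.
    assert (Hb : Rabs (Series (fun n => Tm (cc eps) 0 (S n) x t)) <= Series (fun n => E n * exp (A2 * P))).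
    { apply Series_abs_le.
      - intro k. eapply Rle_trans. apply (Tm_bound _ _ _ _ _ (Rabs x)). lra.
        rewrite Rabs_pos_eq by (left; apply cc_pos). apply term_bound; auto.
      - apply (ex_series_ext (fun n => exp (A2 * P) * E n)). intro n; apply Rmult_comm.
        apply ex_series_Rscal; auto. }
    rewrite (Series_ext (fun n => E n * exp (A2 * P)) (fun n => exp (A2 * P) * E n)) in Hb by (intro n; apply Rmult_comm).
    rewrite Series_scal_l in Hb.
    assert (He2 : exp (A2 * P) * exp (- A2 * P) = 1) by (rewrite <- exp_plus; replace (_ + _) with 0 by ring; apply exp_0).
    assert (0 < exp (- A2 * P)) by apply exp_pos.
    assert (Series E <= Rabs (Series E)) by apply Rle_abs.
    assert (H2 : Rabs (Series (fun n => Tm (cc eps) 0 (S n) x t)) * exp (- A2 * P) <= exp (A2 * P) * Series E * exp (- A2 * P)) by (apply Rmult_le_compat_r; lra).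
    replace (exp (A2 * P) * Series E * exp (- A2 * P)) with (Series E * (exp (A2 * P) * exp (- A2 * P))) in H2 by ring.
    rewrite He2 in H2. lra.
Qed.
Lemma fact_pos n : 0 < INR (Factorial.fact n).
Proof. apply lt_0_INR. apply lt_O_fact. Qed.

Lemma binom_bound : forall s m n, (m + n = s)%nat ->
  INR (Factorial.fact (m + n)) <= 2 ^ (m + n) * INR (Factorial.fact m) * INR (Factorial.fact n).
Proof.
  induction s; intros m n Hs.
  - assert (m = 0%nat) by lia. assert (n = 0%nat) by lia. subst. simpl. lra.
  - destruct m as [|m].
    + simpl. assert (1 <= 2 ^ n) by (apply pow_R1_Rle; lra). assert (Hf0 := fact_pos n). nra.
    + destruct n as [|n].
      * rewrite Nat.add_0_r. simpl (Factorial.fact 0). assert (1 <= 2 ^ S m) by (apply pow_R1_Rle; lra).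
        assert (Hf0 := fact_pos (S m)). simpl INR at 3. nra.
      * assert (H1 := IHs m (S n) ltac:(lia)).
        assert (H2 := IHs (S m) n ltac:(lia)).
        replace (S m + S n)%nat with (S (m + S n)) by lia.
        replace (S m + n)%nat with (m + S n)%nat in H2 by lia.
        rewrite fact_simpl, mult_INR, S_INR, plus_INR, S_INR.
        rewrite (fact_simpl m), (fact_simpl n), !mult_INR, !S_INR.
        rewrite (fact_simpl n), mult_INR, S_INR in H1.
        rewrite (fact_simpl m), mult_INR, S_INR in H2.
        set (F := INR (Factorial.fact (m + S n))) in *.
        set (P := 2 ^ (m + S n)) in *.
        set (a := INR (Factorial.fact m)) in *. set (b := INR (Factorial.fact n)) in *.
        replace (2 ^ S (m + S n)) with (2 * P) by (unfold P; simpl; ring).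
        assert (0 <= INR m) by apply pos_INR. assert (0 <= INR n) by apply pos_INR.
        assert ((INR m + 1) * F <= (INR m + 1) * (P * a * ((INR n + 1) * b))) by (apply Rmult_le_compat_l; lra).
        assert ((INR n + 1) * F <= (INR n + 1) * (P * ((INR m + 1) * a) * b)) by (apply Rmult_le_compat_l; lra).
        nra.
Qed.

Lemma fact_le_pow n : INR (Factorial.fact n) <= INR n ^ n.
Proof.
  induction n. simpl; lra.
  rewrite fact_simpl, mult_INR, <- tech_pow_Rmult.
  apply Rmult_le_compat_l. apply pos_INR.
  apply Rle_trans with (INR n ^ n); auto. apply pow_incr. split. apply pos_INR. apply le_INR; lia.
Qed.

Lemma analytic_deriv_bound (f : R -> R) t0 : real_analytic_at f t0 ->
  exists rho Ma, 0 < rho /\ 0 <= Ma /\ forall n s, t0 <= s <= t0 + rho / 4 ->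
    Rabs (Derive_n f n s) <= 2 * Ma * INR (Factorial.fact n) * (2 / rho) ^ n.
Proof.
  intros [_ [r [Hr Hser]]].
  set (a := fun n => Derive_n f n t0 / INR (Factorial.fact n)).
  set (rho := r / 2).
  assert (Hrho : 0 < rho) by (unfold rho; lra).
  assert (Hs1 : is_series (fun n => a n * rho ^ n) (f (t0 + rho))).
  { assert (H := Hser (t0 + rho)). replace (t0 + rho - t0) with rho in H by ring.
    apply H. rewrite Rabs_pos_eq; unfold rho; lra. }
  assert (Hlim : is_lim_seq (fun n => a n * rho ^ n) 0).
  { apply ex_series_lim_0. eexists; exact Hs1. }
  destruct (@filterlim_bounded R_AbsRing R_NormedModule (fun n => a n * rho ^ n)) as [Ma HMa].
  { exists 0. exact Hlim. }
  assert (HMa' : forall n, Rabs (a n * rho ^ n) <= Ma) by exact HMa.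
  assert (HMa0 : 0 <= Ma) by (eapply Rle_trans; [apply Rabs_pos|apply (HMa' 0%nat)]).
  assert (HCV : Rbar_le rho (CV_radius a)).
  { apply (proj1 (CV_radius_bounded a)). exists Ma. exact HMa'. }
  assert (Hf : forall u, Rabs (u - t0) < r -> f u = PSeries a (u - t0)).
  { intros u Hu. symmetry. apply is_series_unique. apply Hser. exact Hu. }
  exists rho, Ma. split; [auto|split; [auto|]].
  intros n s Hs.
  assert (Hst : Rabs (s - t0) <= rho / 4) by (rewrite Rabs_pos_eq; lra).
  assert (E1 : Derive_n f n s = Derive_n (fun u => PSeries a (u + - t0)) n s).
  { apply Derive_n_ext_loc. exists (mkposreal (rho / 2) ltac:(lra)). intros u Hu.
    assert (Hu' : Rabs (u - s) < rho / 2) by (apply Rball_eq; exact Hu).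
    apply Hf. unfold rho in *.
    assert (Rabs (u - t0) <= Rabs (u - s) + Rabs (s - t0)).
    { replace (u - t0) with ((u - s) + (s - t0)) by ring. apply Rabs_triang. }
    lra. }
  rewrite E1, Derive_n_comp_trans, Derive_n_PSeries.
  2:{ eapply Rbar_lt_le_trans; [|exact HCV]. simpl. replace (s + - t0) with (s - t0) by ring. lra. }
  set (y := s + - t0).
  assert (Hy : Rabs y <= rho / 4) by (unfold y; exact Hst).
  unfold PSeries.
  eapply Rle_trans. apply (Series_abs_le _ (fun m => (Ma * INR (Factorial.fact n) * (2 / rho) ^ n) * (/ 2) ^ m)).
  - intro m. unfold PS_derive_n.
    assert (Hb := binom_bound (m + n) m n eq_refl).
    assert (Hfm := fact_pos m). assert (Hfn := fact_pos n).
    assert (Ha : Rabs (a (m + n)%nat) <= Ma / rho ^ (m + n)).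
    { assert (H := HMa' (m + n)%nat). rewrite Rabs_mult, (Rabs_pos_eq (rho ^ (m + n))) in H by (apply pow_le; lra).
      assert (0 < rho ^ (m + n)) by (apply pow_lt; lra).
      apply (Rmult_le_reg_r (rho ^ (m + n))); auto. field_simplify; lra. }
    assert (Hym : Rabs (y ^ m) <= (rho / 4) ^ m).
    { rewrite <- RPow_abs. apply pow_incr. split; [apply Rabs_pos|exact Hy]. }
    rewrite !Rabs_mult.
    rewrite (Rabs_pos_eq (INR (Factorial.fact (m + n)) / INR (Factorial.fact m))).
    2:{ apply Rdiv_le_0_compat; [apply pos_INR|auto]. }
    apply Rle_trans with ((2 ^ (m + n) * INR (Factorial.fact n)) * (Ma / rho ^ (m + n)) * (rho / 4) ^ m).
    + apply Rmult_le_compat; try (apply Rmult_le_pos); try apply Rabs_pos.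
      apply Rdiv_le_0_compat; [apply pos_INR|auto].
      apply Rmult_le_compat; try apply Rabs_pos.
      apply Rdiv_le_0_compat; [apply pos_INR|auto].
      apply (Rmult_le_reg_r (INR (Factorial.fact m))); auto.
      field_simplify; [|lra]. lra.
      exact Ha. exact Hym.
    + right. rewrite !pow_add. unfold Rdiv. rewrite !Rpow_mult_distr, !pow_inv.
      replace (4 ^ m) with (2 ^ m * 2 ^ m) by (rewrite <- Rpow_mult_distr; f_equal; ring).
      assert (0 < 2 ^ m) by (apply pow_lt; lra). assert (0 < rho ^ m) by (apply pow_lt; lra).
      assert (0 < rho ^ n) by (apply pow_lt; lra).
      field. repeat split; lra.
  - apply (@ex_series_scal_l R_AbsRing R_NormedModule (Ma * INR (fact n) * (2 / rho) ^ n) (fun m => (/2)^m)).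
    apply ex_series_geom. rewrite Rabs_pos_eq; lra.
  - rewrite (Series_scal_l (Ma * INR (fact n) * (2 / rho) ^ n) (fun m => (/2)^m)). rewrite (is_series_unique _ _ (is_series_geom (/ 2) ltac:(rewrite Rabs_pos_eq; lra))).
    right. field.
Qed.
Definition Cn eps (n : nat) : nat -> R := fun k => cc eps k * (2 ^ (2 * k + 1)) ^ n.
Fixpoint php (n : nat) : R := match n with 0%nat => 0 | S n => php n + PI / 2 end.

Lemma Cn_S eps n : Cn eps (S n) = Ct (Cn eps n).
Proof. extensionality k. unfold Cn, Ct. simpl pow. ring. Qed.

Lemma good_Cn eps n : good eps (Cn eps n).
Proof.
  induction n.
  - replace (Cn eps 0) with (cc eps) by (extensionality k; unfold Cn; simpl; ring). apply good_cc.
  - rewrite Cn_S. apply good_Ct. auto.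
Qed.

Lemma Dn_eq eps x0 : 0 < eps -> forall n t,
  Derive_n (fun s => w_eps eps x0 s) n t = Sf (Cn eps n) (php n) x0 t.
Proof.
  intros He n. induction n; intro t.
  - simpl. rewrite w_eps_Sf. replace (Cn eps 0) with (cc eps) by (extensionality k; unfold Cn; simpl; ring).
    reflexivity.
  - simpl Derive_n.
    replace (Derive_n (fun s => w_eps eps x0 s) n) with (fun s => Sf (Cn eps n) (php n) x0 s)
      by (extensionality s; symmetry; apply IHn).
    rewrite Cn_S. apply is_derive_unique. apply is_derive_Reals. apply (Sf_dt eps); auto. apply good_Cn.
Qed.

Lemma INR_4pow k : INR (2 * 4 ^ k) = 2 * 4 ^ k.
Proof. rewrite mult_INR, pow_INR. simpl. replace (1 + 1 + 1 + 1) with 4 by ring. lra. Qed.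

Lemma ex_series_Rminus (a b : nat -> R) : ex_series a -> ex_series b -> ex_series (fun n => a n - b n).
Proof. intros H1 H2. exact (@ex_series_minus R_AbsRing R_NormedModule a b H1 H2). Qed.

Lemma Series_zero (a : nat -> R) : (forall n, a n = 0) -> Series a = 0.
Proof.
  intro H. apply trans_eq with (Series (fun n : nat => 0 * 0)).
  apply Series_ext. intro n. rewrite H. ring.
  rewrite (Series_scal_l 0 (fun _ => 0)). ring.
Qed.

Lemma diff_identity eps C ph x0 t L : 0 < eps -> good eps C ->
  let K := S (S L) in
  let dl := PI / 2 ^ (2 * K + 1) in
  Sf C ph x0 t - Sf C ph x0 (t + dl) =
  sum_f_R0 (fun m => Tm C ph (S m) x0 t - Tm C ph (S m) x0 (t + dl)) L + 2 * Tm C ph K x0 t.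
Proof.
  intros He HC K dl.
  assert (Hb : 2 ^ (2 * K + 1) * dl = PI).
  { unfold dl. field. apply pow_nonzero. lra. }
  unfold Sf. rewrite <- Series_minus by (apply (Sf_ex eps); auto).
  rewrite (Series_incr_n _ (S (S L))) by (try lia; apply ex_series_Rminus; apply (Sf_ex eps); auto).
  rewrite (Series_zero (fun k => _)).
  2:{ intro k. unfold Tm.
      replace (2 ^ (2 * S (S (S L) + k) + 1) * (t + dl)) with
        (2 ^ (2 * S (S (S L) + k) + 1) * t + 2 * INR (2 * 4 ^ k) * PI).
      2:{ rewrite INR_4pow. rewrite <- Hb.
          replace (2 * S (S (S L) + k) + 1)%nat with (2 * K + 1 + 2 * (S k))%nat by (unfold K; lia).
          rewrite pow_add, pow_mult. replace (2 ^ 2) with 4 by ring. rewrite <- tech_pow_Rmult. ring. }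

      replace (2 ^ (2 * S (S (S L) + k) + 1) * t + 2 * INR (2 * 4 ^ k) * PI - 2 ^ S (S (S L) + k) * x0 + ph)
        with ((2 ^ (2 * S (S (S L) + k) + 1) * t - 2 ^ S (S (S L) + k) * x0 + ph) + 2 * INR (2 * 4 ^ k) * PI) by ring.
      rewrite sin_period. ring. }
  simpl pred. rewrite Rplus_0_r. simpl sum_f_R0 at 1. f_equal.
  fold K. unfold Tm.
  replace (2 ^ (2 * K + 1) * (t + dl) - 2 ^ K * x0 + ph) with ((2 ^ (2 * K + 1) * t - 2 ^ K * x0 + ph) + PI)
    by (rewrite <- Hb; ring).
  rewrite neg_sin. ring.
Qed.
Lemma exp_n_le n (q : R) : exp 1 <= q -> exp (INR n) <= q ^ n.
Proof.
  intro H. rewrite <- (Rmult_1_r (INR n)), exp_INR_mult. apply pow_incr. split; [left; apply exp_pos|auto].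
Qed.

Lemma final_arith y b G Ma rho (K n : nat) :
  0 <= y -> 0 < b -> 0 < G -> 0 <= Ma -> 0 < rho ->
  y + INR K + (Rabs (ln (4 * G)) + Rabs (ln (8 * (Ma + 1)))) <= INR n ->
  18 * INR n <= rho * b ->
  exp (- y) * b ^ n <= 4 * Ma * INR (fact n) * (2 / rho) ^ n + 2 * INR K * G * (b / 4) ^ n -> False.
Proof.
  intros Hy Hb HG HMa Hr. set (c0 := Rabs (ln (4 * G)) + Rabs (ln (8 * (Ma + 1)))). intros Hn H18 Hmain.
  assert (He1 := exp_le_3).
  assert (Hc1 : 4 * G <= exp c0).
  { rewrite <- (exp_ln (4 * G)) by lra. apply exp_le_mono.
    unfold c0. assert (H := Rle_abs (ln (4 * G))). assert (0 <= Rabs (ln (8 * (Ma + 1)))) by apply Rabs_pos. lra. }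
  assert (Hc2 : 8 * (Ma + 1) <= exp c0).
  { rewrite <- (exp_ln (8 * (Ma + 1))) by lra. apply exp_le_mono.
    unfold c0. assert (H := Rle_abs (ln (8 * (Ma + 1)))). assert (0 <= Rabs (ln (4 * G))) by apply Rabs_pos. lra. }
  assert (HK : INR K < exp (INR K)) by (assert (H := exp_ineq1_le (INR K)); lra).
  assert (HK0 : 0 <= INR K) by apply pos_INR.
  assert (Hc0 : 0 <= c0) by (unfold c0; assert (H1 := Rabs_pos (ln (4 * G))); assert (H2 := Rabs_pos (ln (8 * (Ma + 1)))); lra).
  assert (Hn4 : exp (INR n) <= 4 ^ n) by (apply exp_n_le; lra).
  assert (Hn9 : exp (2 * INR n) <= 9 ^ n).
  { replace (2 * INR n) with (INR n * 2) by ring. rewrite exp_INR_mult. apply pow_incr.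
    split. left; apply exp_pos. replace 2 with (1 + 1) by ring. rewrite exp_plus. 
    assert (0 < exp 1) by apply exp_pos. nra. }
  assert (Hey : 0 < exp y) by apply exp_pos.
  assert (HeK : 0 < exp (INR K)) by apply exp_pos.
  assert (Hbn : 0 < b ^ n) by (apply pow_lt; lra).
  assert (HQ : exp (- y) * exp y = 1) by (rewrite <- exp_plus; replace (- y + y) with 0 by ring; apply exp_0).
  assert (S1 : 4 * INR K * G * exp y < 4 ^ n).
  { apply Rlt_le_trans with (exp (INR n)); auto.
    apply Rlt_le_trans with (exp y * exp (INR K) * exp c0).
    - assert (INR K * (4 * G) <= exp (INR K) * exp c0).
      { apply Rmult_le_compat; lra. }
      assert (INR K * (4 * G) * exp y <= exp (INR K) * exp c0 * exp y) by (apply Rmult_le_compat_r; lra).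
      destruct (Req_dec (INR K) 0) as [E|E].
      + rewrite E, Rmult_0_r, !Rmult_0_l. apply Rmult_lt_0_compat; [apply Rmult_lt_0_compat|]; apply exp_pos.
      + assert (INR K * (4 * G) < exp (INR K) * exp c0).
        { apply Rlt_le_trans with (exp (INR K) * (4 * G)). apply Rmult_lt_compat_r; lra.
          apply Rmult_le_compat_l; lra. }
        nra.
    - rewrite <- !exp_plus. apply exp_le_mono. lra. }
  assert (S2 : 8 * Ma * exp y < 9 ^ n).
  { apply Rlt_le_trans with (exp (2 * INR n)); auto.
    apply Rlt_le_trans with (exp c0 * exp y).
    - apply Rmult_lt_compat_r; auto. lra.
    - rewrite <- exp_plus. apply exp_le_mono. assert (0 <= INR n) by apply pos_INR. lra. }
  assert (T1 : 2 * INR K * G * (b / 4) ^ n < exp (- y) * b ^ n / 2).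
  { unfold Rdiv. rewrite Rpow_mult_distr, pow_inv.
    assert (H4 : 0 < 4 ^ n) by (apply pow_lt; lra).
    apply (Rmult_lt_reg_r (2 * 4 ^ n * exp y)). apply Rmult_lt_0_compat; lra.
    replace (2 * INR K * G * (b ^ n * / 4 ^ n) * (2 * 4 ^ n * exp y)) with ((4 * INR K * G * exp y) * b ^ n) by (field; lra).
    replace (exp (- y) * b ^ n * / 2 * (2 * 4 ^ n * exp y)) with (4 ^ n * b ^ n * (exp (- y) * exp y)) by (field; lra).
    rewrite HQ, Rmult_1_r. apply Rmult_lt_compat_r; auto. }
  assert (T2 : 4 * Ma * INR (fact n) * (2 / rho) ^ n <= 4 * Ma * (b / 9) ^ n).
  { rewrite !Rmult_assoc. apply Rmult_le_compat_l. lra. apply Rmult_le_compat_l. lra.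
    apply Rle_trans with (INR n ^ n * (2 / rho) ^ n).
    apply Rmult_le_compat_r. apply pow_le. apply Rdiv_le_0_compat; lra. apply fact_le_pow.
    rewrite <- Rpow_mult_distr. apply pow_incr. split.
    apply Rmult_le_pos. apply pos_INR. apply Rdiv_le_0_compat; lra.
    apply (Rmult_le_reg_r (9 * rho)). lra.
    replace (INR n * (2 / rho) * (9 * rho)) with (18 * INR n) by (field; lra).
    replace (b / 9 * (9 * rho)) with (rho * b) by field. exact H18. }
  assert (T3 : 4 * Ma * (b / 9) ^ n < exp (- y) * b ^ n / 2).
  { unfold Rdiv. rewrite Rpow_mult_distr, pow_inv.
    assert (H9 : 0 < 9 ^ n) by (apply pow_lt; lra).
    apply (Rmult_lt_reg_r (2 * 9 ^ n * exp y)). apply Rmult_lt_0_compat; lra.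
    replace (4 * Ma * (b ^ n * / 9 ^ n) * (2 * 9 ^ n * exp y)) with ((8 * Ma * exp y) * b ^ n) by (field; lra).
    replace (exp (- y) * b ^ n * / 2 * (2 * 9 ^ n * exp y)) with (9 ^ n * b ^ n * (exp (- y) * exp y)) by (field; lra).
    rewrite HQ, Rmult_1_r. apply Rmult_lt_compat_r; auto. }
  lra.
Qed.
Lemma sin_choice th : 1 / 2 <= Rabs (sin th) \/ 1 / 2 <= Rabs (sin (th + PI / 2)).
Proof.
  rewrite sin_plus, sin_PI2, cos_PI2. replace (sin th * 0 + cos th * 1) with (cos th) by ring.
  destruct (Rle_dec (1/2) (Rabs (sin th))) as [H|H]; [left; auto|].
  destruct (Rle_dec (1/2) (Rabs (cos th))) as [H'|H']; [right; auto|].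
  exfalso. assert (E := sin2_cos2 th). unfold Rsqr in E.
  assert (E1 : sin th * sin th = Rabs (sin th) * Rabs (sin th))
    by (rewrite <- Rabs_mult; symmetry; apply Rabs_pos_eq; nra).
  assert (E2 : cos th * cos th = Rabs (cos th) * Rabs (cos th))
    by (rewrite <- Rabs_mult; symmetry; apply Rabs_pos_eq; nra).
  assert (P1 := Rabs_pos (sin th)). assert (P2 := Rabs_pos (cos th)).
  apply Rnot_le_lt in H. apply Rnot_le_lt in H'.
  nra.
Qed.

Lemma G_bound eps x0 j : 0 < eps ->
  cc eps j * exp (2 ^ j * Rabs x0) <= exp (Rpower 2 (1 / eps) * abspow x0 (1 + 1 / eps)).
Proof.
  intro He. eapply Rle_trans. apply term_bound; auto.
  rewrite <- (Rmult_1_l (exp (Rpower 2 (1 / eps) * abspow x0 (1 + 1 / eps)))) at 2.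
  apply Rmult_le_compat_r. left; apply exp_pos.
  rewrite <- exp_0 at 2. apply exp_le_mono.
  assert (0 < Rpower 2 ((1 + eps) * INR j)) by apply exp_pos. lra.
Qed.

Lemma low_bound eps x0 n L t dl ph : 0 < eps ->
  Rabs (sum_f_R0 (fun m => Tm (Cn eps n) ph (S m) x0 t - Tm (Cn eps n) ph (S m) x0 (t + dl)) L)
  <= 2 * INR (S L) * exp (Rpower 2 (1 / eps) * abspow x0 (1 + 1 / eps)) * (2 ^ (2 * S L + 1)) ^ n.
Proof.
  intro He. set (G := exp (Rpower 2 (1 / eps) * abspow x0 (1 + 1 / eps))).
  eapply Rle_trans. apply sum_f_R0_triangle.
  eapply Rle_trans. apply (sum_Rle _ (fun _ => 2 * G * (2 ^ (2 * S L + 1)) ^ n)).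
  2:{ rewrite sum_cte. right; ring. }
  intros m Hm.
  assert (HT : forall s, Rabs (Tm (Cn eps n) ph (S m) x0 s) <= G * (2 ^ (2 * S L + 1)) ^ n).
  { intro s. eapply Rle_trans. apply (Tm_bound _ _ _ _ _ (Rabs x0)). lra.
    unfold Cn. rewrite Rabs_mult, Rabs_pos_eq by (left; apply cc_pos).
    rewrite Rabs_pos_eq by (apply pow_le; apply pow_le; lra).
    replace (cc eps (S m) * (2 ^ (2 * S m + 1)) ^ n * exp (2 ^ S m * Rabs x0))
      with ((cc eps (S m) * exp (2 ^ S m * Rabs x0)) * (2 ^ (2 * S m + 1)) ^ n) by ring.
    apply Rmult_le_compat. apply Rmult_le_pos; left; [apply cc_pos|apply exp_pos].
    apply pow_le; apply pow_le; lra.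
    apply G_bound; auto.
    apply pow_incr. split. apply pow_le; lra. apply Rle_pow. lra. lia. }
  unfold Rminus. eapply Rle_trans. apply Rabs_triang. rewrite Rabs_Ropp.
  assert (H1 := HT t). assert (H2 := HT (t + dl)). lra.
Qed.

Lemma main_lower eps x0 n K t ph :
  1 / 2 <= Rabs (sin (2 ^ (2 * K + 1) * t - 2 ^ K * x0 + ph)) ->
  exp (- (Rpower 2 ((1 + eps) * INR K) + 2 ^ K * Rabs x0)) * (2 ^ (2 * K + 1)) ^ n
  <= Rabs (2 * Tm (Cn eps n) ph K x0 t).
Proof.
  intro Hs. unfold Tm, Cn, cc.
  rewrite !Rabs_mult. rewrite (Rabs_pos_eq 2) by lra.
  rewrite (Rabs_pos_eq (exp (- Rpower 2 ((1 + eps) * INR K)))) by (left; apply exp_pos).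
  rewrite (Rabs_pos_eq (exp (- 2 ^ K * x0))) by (left; apply exp_pos).
  rewrite (Rabs_pos_eq ((2 ^ (2 * K + 1)) ^ n)) by (apply pow_le; apply pow_le; lra).
  assert (Hle : exp (- (Rpower 2 ((1 + eps) * INR K) + 2 ^ K * Rabs x0)) <=
                exp (- Rpower 2 ((1 + eps) * INR K)) * exp (- 2 ^ K * x0)).
  { rewrite <- exp_plus. apply exp_le_mono.
    assert (0 < 2 ^ K) by (apply pow_lt; lra).
    assert (x0 <= Rabs x0) by apply Rle_abs. assert (- x0 <= Rabs x0) by (rewrite <- Rabs_Ropp; apply Rle_abs).
    nra. }
  assert (0 < exp (- (Rpower 2 ((1 + eps) * INR K) + 2 ^ K * Rabs x0))) by apply exp_pos.
  assert (0 < (2 ^ (2 * K + 1)) ^ n) by (apply pow_lt; apply pow_lt; lra).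
  set (E := exp (- Rpower 2 ((1 + eps) * INR K)) * exp (- 2 ^ K * x0)) in *.
  replace (2 * (exp (- Rpower 2 ((1 + eps) * INR K)) * (2 ^ (2 * K + 1)) ^ n * exp (- 2 ^ K * x0) *
     Rabs (sin (2 ^ (2 * K + 1) * t - 2 ^ K * x0 + ph))))
    with ((E * (2 ^ (2 * K + 1)) ^ n) * (2 * Rabs (sin (2 ^ (2 * K + 1) * t - 2 ^ K * x0 + ph)))) by (unfold E; ring).
  rewrite <- (Rmult_1_r (exp _ * _)).
  apply Rmult_le_compat; try lra. apply Rmult_le_pos; lra.
  apply Rmult_le_compat_r; lra.
Qed.

Lemma nat_ceil x : 0 <= x -> exists n : nat, x <= INR n <= x + 1.
Proof.
  intro Hx. destruct (archimed x) as [H1 H2].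
  assert (Hz : (0 <= up x)%Z). { apply le_IZR. lra. }
  exists (Z.to_nat (up x)). rewrite INR_IZR_INZ, Z2Nat.id by auto. lra.
Qed.

Lemma part_nonanalytic eps : 0 < eps < 1 ->
  forall x0 t0 : R, ~ real_analytic_at (fun t => w_eps eps x0 t) t0.
Proof.
  intros [He He1] x0 t0 Han.
  destruct (analytic_deriv_bound _ _ Han) as [rho [Ma [Hr [HMa Hbd]]]].
  set (G := exp (Rpower 2 (1 / eps) * abspow x0 (1 + 1 / eps))).
  assert (HG : 0 < G) by apply exp_pos.
  set (c0 := Rabs (ln (4 * G)) + Rabs (ln (8 * (Ma + 1)))).
  assert (Hc0 : 0 <= c0) by (unfold c0; assert (H1 := Rabs_pos (ln (4 * G))); assert (H2 := Rabs_pos (ln (8 * (Ma + 1)))); lra).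
  set (Z := Rabs x0 + c0 + 3).
  assert (Hl2 : / 2 < ln 2) by apply ln_lt_2.
  destruct (INR_archimed (rho * (1 - eps) * ln 2) (9 * Z)) as [K1 HK1].
  { apply Rmult_lt_0_compat; [apply Rmult_lt_0_compat|]; lra. }
  destruct (INR_archimed rho 12) as [K2 HK2]. lra.
  set (L := (K1 + K2)%nat). set (K := S (S L)).
  assert (HK1' : INR K1 <= INR K) by (apply le_INR; unfold K, L; lia).
  assert (HK2' : INR K2 <= INR K) by (apply le_INR; unfold K, L; lia).
  set (b := 2 ^ (2 * K + 1)).
  assert (Hb0 : 0 < b) by (apply pow_lt; lra).
  set (EK := exp (eps * INR K * ln 2)).
  assert (HEK : 1 <= EK) by (unfold EK; rewrite <- exp_0; apply exp_le_mono;
     assert (0 <= INR K) by apply pos_INR; assert (0 <= eps * INR K) by (apply Rmult_le_pos; lra); nra).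
  set (y := Rpower 2 ((1 + eps) * INR K) + 2 ^ K * Rabs x0).
  assert (Hy : y = 2 ^ K * EK + 2 ^ K * Rabs x0) by (unfold y, EK; rewrite Rpower2_split; reflexivity).
  assert (H2K : 0 < 2 ^ K) by (apply pow_lt; lra).
  assert (Hy0 : 0 <= y) by (rewrite Hy; assert (0 <= Rabs x0) by apply Rabs_pos; nra).
  destruct (nat_ceil (y + INR K + c0)) as [n [Hn1 Hn2]].
  { assert (0 <= INR K) by apply pos_INR. lra. }
  assert (HKpow : 2 ^ K >= INR K) by (apply Rle_ge; apply pow2_ge_INR).
  assert (Hsplit : 2 ^ K = EK * exp ((1 - eps) * INR K * ln 2)).
  { unfold EK. rewrite <- exp_plus, pow2_exp. f_equal. ring. }
  assert (Hbig : 9 * Z <= rho * exp ((1 - eps) * INR K * ln 2)).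
  { assert (H := exp_ineq1_le ((1 - eps) * INR K * ln 2)).
    assert (rho * (1 - eps) * ln 2 * INR K1 <= rho * (1 - eps) * ln 2 * INR K).
    { apply Rmult_le_compat_l; auto. left. apply Rmult_lt_0_compat; [apply Rmult_lt_0_compat|]; lra. }
    assert (0 <= (1 - eps) * INR K * ln 2).
    { apply Rmult_le_pos; [apply Rmult_le_pos|]; try lra. apply pos_INR. }
    nra. }
  assert (H18 : 18 * INR n <= rho * b).
  { assert (Hnz : INR n <= 2 ^ K * EK * Z).
    { unfold Z. assert (0 <= Rabs x0) by apply Rabs_pos. 
      assert (1 <= 2 ^ K) by (apply pow_R1_Rle; lra).
      assert (INR K <= 2 ^ K * EK) by nra.
      assert (1 <= 2 ^ K * EK) by nra.
      assert (2 ^ K * Rabs x0 <= 2 ^ K * EK * Rabs x0).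
      { rewrite <- (Rmult_1_r (2 ^ K)) at 1. apply Rmult_le_compat_r; auto. apply Rmult_le_compat_l; lra. }
      assert (c0 <= 2 ^ K * EK * c0) by (rewrite <- (Rmult_1_l c0) at 1; apply Rmult_le_compat_r; lra).
      rewrite Hy in Hn2. lra. }
    assert (Hb : b = 2 * (2 ^ K * 2 ^ K)).
    { unfold b. rewrite <- pow_add. replace (2 * K + 1)%nat with (S (K + K)) by lia. simpl. ring. }
    assert (HX : 2 ^ K * EK * (rho * exp ((1 - eps) * INR K * ln 2)) = rho * (2 ^ K * 2 ^ K)).
    { replace (rho * (2 ^ K * 2 ^ K)) with (rho * (2 ^ K * (EK * exp ((1 - eps) * INR K * ln 2)))) by (rewrite <- Hsplit; ring).
      ring. }
    rewrite Hb.
    assert (0 <= 2 ^ K * EK) by nra.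
    assert (18 * INR n <= 18 * (2 ^ K * EK * Z)) by lra.
    assert (2 ^ K * EK * (9 * Z) <= 2 ^ K * EK * (rho * exp ((1 - eps) * INR K * ln 2))) by (apply Rmult_le_compat_l; lra).
    nra. }
  set (th := b * t0 - 2 ^ K * x0 + php n).
  assert (Hpt : exists t, t0 <= t <= t0 + PI / (2 * b) /\ 1 / 2 <= Rabs (sin (b * t - 2 ^ K * x0 + php n))).
  { destruct (sin_choice th) as [Hc|Hc].
    - exists t0. split. assert (0 < PI / (2 * b)) by (apply Rdiv_lt_0_compat; [apply PI_RGT_0|lra]). lra. exact Hc.
    - exists (t0 + PI / (2 * b)). split. assert (0 < PI / (2 * b)) by (apply Rdiv_lt_0_compat; [apply PI_RGT_0|lra]). lra.
      replace (b * (t0 + PI / (2 * b)) - 2 ^ K * x0 + php n) with (th + PI / 2) by (unfold th; field; lra). exact Hc. }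
  destruct Hpt as [t [Ht Hsin]].
  set (dl := PI / b).
  assert (HPI := PI_RGT_0). assert (HPI4 := PI_4).
  assert (Hdl : 0 < dl) by (apply Rdiv_lt_0_compat; lra).
  assert (HbK : 2 * INR K <= b).
  { unfold b. rewrite pow_add, pow_mult. replace (2 ^ 2) with 4 by ring. 
    assert (INR K <= 4 ^ K). { eapply Rle_trans. apply pow2_ge_INR. apply pow_incr; lra. } lra. }
  assert (Hrange : t0 + PI / (2 * b) + dl <= t0 + rho / 4).
  { unfold dl. assert (INR K2 * rho <= INR K * rho) by (apply Rmult_le_compat_r; lra).
    assert (PI / (2 * b) + PI / b = 3 * PI / (2 * b)) by (field; lra).
    assert (3 * PI / (2 * b) <= rho / 4).
    { apply (Rmult_le_reg_r (2 * b)). lra. replace (3 * PI / (2 * b) * (2 * b)) with (3 * PI) by (field; lra).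
      nra. }
    lra. }
  assert (HD1 : Rabs (Sf (Cn eps n) (php n) x0 t) <= 2 * Ma * INR (fact n) * (2 / rho) ^ n).
  { rewrite <- Dn_eq by auto. apply Hbd. lra. }
  assert (HD2 : Rabs (Sf (Cn eps n) (php n) x0 (t + dl)) <= 2 * Ma * INR (fact n) * (2 / rho) ^ n).
  { rewrite <- Dn_eq by auto. apply Hbd. lra. }
  assert (Hid := diff_identity eps (Cn eps n) (php n) x0 t L He (good_Cn eps n)).
  cbv zeta in Hid. fold K in Hid. fold b in Hid. fold dl in Hid.
  assert (Hlow := low_bound eps x0 n L t dl (php n) He). fold G in Hlow.
  assert (Hmain := main_lower eps x0 n K t (php n) Hsin). fold b y in Hmain.
  assert (HbL : 2 ^ (2 * S L + 1) = b / 4).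
  { unfold b, K. replace (2 * S (S L) + 1)%nat with (2 * S L + 1 + 2)%nat by lia. rewrite (pow_add 2 (2 * S L + 1) 2). field. }
  rewrite HbL in Hlow.
  apply (final_arith y b G Ma rho K n); auto.
  - apply Rle_trans with (Rabs (2 * Tm (Cn eps n) (php n) K x0 t)); auto.
    replace (2 * Tm (Cn eps n) (php n) K x0 t) with
      ((Sf (Cn eps n) (php n) x0 t - Sf (Cn eps n) (php n) x0 (t + dl)) -
       sum_f_R0 (fun m => Tm (Cn eps n) (php n) (S m) x0 t - Tm (Cn eps n) (php n) (S m) x0 (t + dl)) L)
      by (rewrite Hid; ring).
    assert (HSL : INR (S L) <= INR K) by (apply le_INR; unfold K; lia).
    assert (0 <= (b / 4) ^ n) by (apply pow_le; lra).
    assert (2 * INR (S L) * G * (b / 4) ^ n <= 2 * INR K * G * (b / 4) ^ n).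
    { apply Rmult_le_compat_r; auto. apply Rmult_le_compat_r; lra. }
    unfold Rminus at 1. eapply Rle_trans. apply Rabs_triang. rewrite Rabs_Ropp.
    unfold Rminus at 1. assert (Hx := Rabs_triang (Sf (Cn eps n) (php n) x0 t) (- Sf (Cn eps n) (php n) x0 (t + dl))).
    rewrite Rabs_Ropp in Hx. lra.
Qed.

Theorem theorem1p2 (eps : R) (Heps : 0 < eps < 1) :
  smooth2 (w_eps eps) /\
  (forall x t, dt (w_eps eps) x t - dx (dx (w_eps eps)) x t = 0) /\
  (forall x0 t0 : R, ~ real_analytic_at (fun t => w_eps eps x0 t) t0) /\
  (exists A1 A2 : R, 0 < A1 /\ 0 < A2 /\
     forall x t : R,
       Rabs (w_eps eps x t) * exp (- A2 * abspow x (1 + 1 / eps)) <= A1).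
Proof.
  destruct Heps as [He He1].
  split; [apply part_smooth; auto|].
  split; [apply part_heat; auto|].
  split; [apply part_nonanalytic; auto|].
  apply part_growth; auto.
Qed.
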